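(* For every positive integer $m$, $$\zeta(m,1)=2^{\lfloor (m-1)/2\rfloor},\qquad \zeta(m,2)=3^{\lfloor (m-1)/2\rfloor},$$ $$\zeta(m,3)=\frac{(2+\sqrt2)^{\lfloor (m+1)/2\rfloor}+(2-\sqrt2)^{\lfloor (m+1)/2\rfloor}}{4},$$ $$\zeta(m,4)=\frac{\big(\tfrac{5+\sqrt5}{2}\big)^{\lfloor (m+1)/2\rfloor}+\big(\tfrac{5-\sqrt5}{2}\big)^{\lfloor (m+1)/2\rfloor}}{5},$$ $$\zeta(m,5)=\frac{(2+\sqrt3)^{\lfloor (m+1)/2\rfloor}+(2-\sqrt3)^{\lfloor (m+1)/2\rfloor}+2^{\lfloor (m+1)/2\rfloor}}{6}.$$
   Context: For positive integers $m$ and $\delta$, a $\delta$-deviation set of size $m$ is a finite sequence $(\alpha_1,\alpha_2,\dots,\alpha_\ell)$ of positive integers such that (i) $\sum_i\alpha_i=m$; (ii) $\big|\sum_i\alpha_{2i-1}-\sum_i\alpha_{2i}\big|\le 1$; (iii) $\big|\sum_{1\le i\le j}(-1)^{i-1}\alpha_i\big|\le\delta$ for every $j\ge 1$. $\zeta(m,\delta)$ denotes the number of $\delta$-deviation sets of size $m$. *)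

(* Defs.v *)
From HB Require Import structures.
From mathcomp Require Import all_boot all_order all_algebra.
Set Implicit Arguments. Unset Strict Implicit. Unset Printing Implicit Defensive.
Import Order.TTheory GRing.Theory Num.Theory.

(* A sequence (alpha_1,...,alpha_l) is represented by
   s : seq nat with alpha_i = nth 0 s (i-1) (0-based indices in Rocq). *)

Definition alt_psum (s : seq nat) (j : nat) : int :=
  (\sum_(i < j) (-1) ^+ i * (nth 0 s i)%:Z)%R.

(* sum_i alpha_{2i-1}  (1-based odd positions = 0-based even positions) *)
Definition odd_pos_sum (s : seq nat) : nat :=
  \sum_(i < size s | ~~ odd i) nth 0 s i.
Definition even_pos_sum (s : seq nat) : nat :=
  \sum_(i < size s | odd i) nth 0 s i.

Definition deviation_set (m delta : nat) (s : seq nat) : bool :=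
  [&& all (fun a => 0 < a) s,
      sumn s == m,
      (`|(odd_pos_sum s)%:Z - (even_pos_sum s)%:Z| <= 1)%R
    & all (fun j => `|alt_psum s j| <= delta%:Z)%R (iota 1 (size s))].
      (* (iii): for j >= size s the partial sum equals the j = size s one *)

Fixpoint seqs_of (k n : nat) : seq (seq nat) :=
  if k is k'.+1 then [seq a :: t | a <- iota 1 n, t <- seqs_of k' n] else [:: [::]].

(* every sequence of positive integers summing to m has length <= m and
   entries <= m, so it occurs (exactly once) in this list *)
Definition candidates (m : nat) : seq (seq nat) :=
  flatten [seq seqs_of k m | k <- iota 0 m.+1].

Definition zeta (m delta : nat) : nat :=
  count (deviation_set m delta) (candidates m).

(* Main.v *)
Require Import Defs.
From HB Require Import structures.
From mathcomp Require Import all_boot all_order all_algebra.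
From mathcomp Require Import zify ring lra.
Import Order.TTheory GRing.Theory Num.Theory.
Local Open Scope ring_scope.
Definition sg (b : bool) : int := if b then 1 else -1.

Fixpoint good (d : nat) (x : int) (b : bool) (s : seq nat) : bool :=
  match s with
  | [::] => `|x| <= 1
  | a :: t => [&& (0 < a)%N, `|x + sg b * a%:Z| <= d%:Z & good d (x + sg b * a%:Z) (~~ b) t]
  end.

Lemma alt_psum0 s : alt_psum s 0 = 0.
Proof. by rewrite /alt_psum big_ord0. Qed.

Lemma alt_psum_cons a t j : alt_psum (a :: t) j.+1 = a%:Z - alt_psum t j.
Proof.
rewrite /alt_psum big_ord_recl /= expr0 mul1r; congr (_ + _).
rewrite -sumrN; apply: eq_bigr => i _ /=.
by rewrite /bump /= exprS mulN1r mulNr.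
Qed.

Lemma good_char d x b s :
  good d x b s = [&& all (fun a => 0 < a)%N s,
                     `|x + sg b * alt_psum s (size s)| <= 1
                   & all (fun j => `|x + sg b * alt_psum s j| <= d%:Z) (iota 1 (size s))].
Proof.
elim: s x b => [|a t IH] x b /=; first by rewrite alt_psum0 mulr0 addr0 andbT.
rewrite IH alt_psum_cons.
have E : forall p, x + sg b * a%:Z + sg (~~ b) * p = x + sg b * (a%:Z - p).
  by move=> p; case: b => /=; ring.
rewrite !E (iotaDl 1 1) all_map alt_psum_cons alt_psum0 subr0.
rewrite (@eq_all _ (fun j => `|x + sg b * alt_psum (a :: t) (1 + j)| <= d%:Z) (fun j => `|x + sg b * (a%:Z - alt_psum t j)| <= d%:Z)); last first.
  by move=> j /=; rewrite add1n alt_psum_cons.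
rewrite (@eq_all _ (fun j => `|x + sg b * a%:Z + sg (~~ b) * alt_psum t j| <= d%:Z) (fun j => `|x + sg b * (a%:Z - alt_psum t j)| <= d%:Z)); last by move=> j /=; rewrite E.
set A := all _ t. set B := (`|_| <= 1). set C := (`|x + sg b * a%:Z| <= d%:Z). by case: A; case: B; case: C; case: (0<a)%N.
Qed.

Lemma odd_even_alt s :
  (odd_pos_sum s)%:Z - (even_pos_sum s)%:Z = alt_psum s (size s).
Proof.
rewrite /alt_psum /odd_pos_sum /even_pos_sum [RHS](bigID (fun i : 'I_(size s) => odd i)) /=.
rewrite addrC -!natz !natr_sum -sumrN; congr (_ + _); apply: eq_bigr => i Hi.
  by rewrite -signr_odd (negbTE Hi) expr0 mul1r natz.
by rewrite -signr_odd Hi expr1 mulN1r natz.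
Qed.

Lemma dev_good m d s :
  deviation_set m d s = (sumn s == m) && good d 0 true s.
Proof.
rewrite /deviation_set good_char odd_even_alt /= add0r.
under [X in _ = _ && (_ && (_ && X))]eq_all do rewrite add0r mul1r.
rewrite mul1r.
by case: (all _ s); case: (sumn s == m); case: (`|_| <= 1).
Qed.

Section Count.
Variable d : nat.
Definition ok (x : int) : bool := `|x| <= d%:Z.
Definition Pr (x : int) (b : bool) (r : nat) (s : seq nat) : bool :=
  (sumn s == r) && good d x b s.
Definition N k n x b r : nat := count (Pr x b r) (seqs_of k n).

Lemma N0 n x b r : N 0 n x b r = ((r == 0)%N && (`|x| <= 1)).
Proof. by rewrite /N /= /Pr /= addn0 eq_sym. Qed.

Lemma NS k n x b r :
  N k.+1 n x b r = (\sum_(a <- iota 1 n)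
     (if [&& (0 < a)%N, (a <= r)%N & ok (x + sg b * a%:Z)]
      then N k n (x + sg b * a%:Z) (~~ b) (r - a) else 0))%N.
Proof.
rewrite /N /= count_flatten sumnE !big_map; apply: eq_bigr => a _.
rewrite count_map /preim /Pr /=.
case: (0 < a)%N => /=; last by rewrite (@eq_count _ _ pred0) ?count_pred0 // => t; rewrite /= !andbF.
case: (leqP a r) => har /=.
  rewrite /ok; case Hok: (`|x + sg b * a%:Z| <= d%:Z) => /=.
    apply: eq_count => t /=; congr (_ && _).
    by apply/eqP/eqP => [<-|->]; [rewrite addKn | rewrite subnKC].
  rewrite (@eq_count _ _ pred0) ?count_pred0 // => t; first by rewrite /= andbF.
rewrite (@eq_count _ _ pred0) ?count_pred0 // => t /=.
apply/negbTE/negP => /andP [/eqP E _]; move: har; rewrite -E; lia.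
Qed.
End Count.

Section Count2.
Variable d : nat.
Definition S K n x b r : nat := (\sum_(k < K.+1) N d k n x b r)%N.
Definition C r x b : nat := S r r x b r.

Lemma S_eq r : forall K n x b, (r <= K)%N -> (r <= n)%N ->
  S K n x b r = (((r == 0)%N && (`|x| <= 1)) + \sum_(a <- iota 1 r)
     (if ok d (x + sg b * a%:Z) then C (r - a) (x + sg b * a%:Z) (~~ b) else 0))%N.
Proof.
elim/ltn_ind: r => r IH K n x b hK hn.
rewrite /S big_ord_recl N0; congr (_ + _)%N.
case: K hK => [|K] hK.
  have -> : r = 0%N by lia.
  by rewrite big_ord0 big_nil.
rewrite (eq_bigr (fun i : 'I_K.+1 => N d i.+1 n x b r)); last by move=> i _; rewrite lift0.
under eq_bigr do rewrite NS.
rewrite exchange_big /=.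
rewrite -(subnKC hn) iotaD big_cat /=.
rewrite [X in (_ + X)%N]big1_seq ?addn0; last first.
  move=> a /andP [_]; rewrite mem_iota => /andP [h1 h2].
  have -> : (a <= r)%N = false by lia.
  by rewrite andbF /= big1.
rewrite !big_seq; apply: eq_bigr => a; rewrite mem_iota => /andP [h1 h2].
have -> : (0 < a)%N by lia.
have -> : (a <= r)%N by lia.
rewrite /=; case: (ok d _); last by rewrite big1.
rewrite /C subnKC //.
change (S K n (x + sg b * a%:Z) (~~ b) (r - a) = S (r - a) (r - a) (x + sg b * a%:Z) (~~ b) (r - a)).
rewrite (IH (r - a)%N) ?(IH (r - a)%N) //; lia.
Qed.
End Count2.

Lemma zeta_C m d : zeta m d = C d m 0 true.
Proof.
rewrite /zeta /candidates count_flatten sumnE big_map /C /S.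
rewrite -(big_mkord xpredT (fun k => N d k m 0 true m)) /index_iota subn0.
rewrite big_map; apply: eq_bigr => k _; rewrite /N; apply: eq_count => s; by rewrite dev_good.
Qed.

Lemma C_0 d x b : C d 0 x b = (`|x| <= 1) :> nat.
Proof. by rewrite /C S_eq //= big_nil addn0. Qed.

Lemma C_S d r x b : ok d x -> C d r.+1 x b =
  (if ok d (x + sg b) then C d r (x + sg b) (~~ b) + (if (0 < r)%N then C d r (x + sg b) b else 0) else 0)%N.
Proof.
move=> hx.
rewrite {1}/C S_eq //= add0n big_cons subn1 /= mulr1.
rewrite (iotaDl 1 1) big_map.
have E : forall a : nat, x + sg b * (1 + a)%N%:Z = x + sg b + sg b * a%:Z.
  by move=> a; rewrite PoszD mulrDr mulr1 addrA.
under eq_bigr do rewrite E subnDA subn1 /=.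
case Hok: (ok d (x + sg b)).
  congr (_ + _)%N.
  case: r => [|r]; first by rewrite big_nil.
  by rewrite /= {2}/C S_eq //= add0n.
rewrite big1_seq // => a /andP [_]; rewrite mem_iota => /andP [h1 h2].
suff -> : ok d (x + sg b + sg b * a%:Z) = false by [].
move: hx Hok; rewrite /ok; clear E; case: b => /=; lia.
Qed.

Fixpoint Vn (d n i : nat) : nat :=
  if n is n'.+1 then
    ((if (i < d + d)%N then Vn d n' i.+1 else 0) + (if (0 < i)%N then Vn d n' i.-1 else 0))%N
  else ((i <= d.+1)%N && (d <= i.+1)%N).

Definition Vi d n (y : int) : nat :=
  if n is 0 then (`|y| <= 1 : nat) else (C d n y true + C d n y false)%N.

Lemma Vi_S d n y : ok d y -> Vi d n.+1 y =
  ((if ok d (y + 1) then Vi d n (y + 1) else 0) + (if ok d (y - 1) then Vi d n (y - 1) else 0))%N.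
Proof.
move=> hy; rewrite /Vi !C_S //=.
case: n => [|n] /=; first by rewrite !C_0 !addn0.
by rewrite (addnC (C d n.+1 (y + 1) false)).
Qed.

Lemma Vi_Vn d n : forall i, (i <= d + d)%N -> Vi d n (i%:Z - d%:Z) = Vn d n i.
Proof.
elim: n => [|n IH] i hi.
  rewrite /= ; congr nat_of_bool; apply/idP/idP; lia.
rewrite Vi_S; last by rewrite /ok; lia.
rewrite /=; congr (_ + _)%N.
  have -> : ok d (i%:Z - d%:Z + 1) = (i < d + d)%N by rewrite /ok; apply/idP/idP; lia.
  case: ltnP => h //.
  have -> : i%:Z - d%:Z + 1 = i.+1%:Z - d%:Z by rewrite -addn1 PoszD; ring.
  by apply: IH.
have -> : ok d (i%:Z - d%:Z - 1) = (0 < i)%N by rewrite /ok; apply/idP/idP; lia.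
case: ltnP => h //.
have -> : i%:Z - d%:Z - 1 = i.-1%:Z - d%:Z.
  by rewrite -{1}(prednK h) -addn1 PoszD; ring.
by apply: IH; lia.
Qed.

Lemma zeta_Vn d n : (0 < d)%N -> zeta n.+1 d = Vn d n d.+1.
Proof.
move=> hd; rewrite zeta_C C_S /ok ?normr0 // add0r /=.
have -> : `|1 : int| <= d%:Z by lia.
rewrite -(@Vi_Vn d n d.+1); last lia.
have -> : d.+1%:Z - d%:Z = 1 by rewrite -addn1 PoszD; ring.
case: n => [|n] /=; first by rewrite C_0 addn0.
by rewrite addnC.
Qed.

Lemma Vsym d n : forall i, (i <= d + d)%N -> Vn d n i = Vn d n (d + d - i).
Proof.
elim: n => [|n IH] i hi /=.
  by congr nat_of_bool; apply/idP/idP; lia.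
rewrite addnC; congr (_ + _)%N.
  have -> : (0 < i)%N = (d + d - i < d + d)%N by apply/idP/idP; lia.
  case: ifP => h //; rewrite IH; last lia.
  by congr Vn; lia.
have -> : (i < d + d)%N = (0 < d + d - i)%N by apply/idP/idP; lia.
case: ifP => h //; rewrite IH; last lia.
by congr Vn; lia.
Qed.

Lemma VsymE d n i j : (i + j == d + d)%N -> Vn d n i = Vn d n j.
Proof. move=> /eqP h; rewrite Vsym; [congr Vn | ]; lia. Qed.

Lemma rec1 n : (Vn 1 n.+2 2 = 2 * Vn 1 n 2)%N.
Proof. rewrite /= ?(VsymE 1 n 0 2 erefl); lia. Qed.
Lemma rec2 n : (Vn 2 n.+2 3 = 3 * Vn 2 n 3)%N.
Proof. rewrite /= ?(VsymE 2 n 1 3 erefl); lia. Qed.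
Lemma rec3 n : (Vn 3 n.+4 4 + 2 * Vn 3 n 4 = 4 * Vn 3 n.+2 4)%N.
Proof. rewrite /= ?(VsymE 3 n 6 0 erefl) ?(VsymE 3 n 4 2 erefl); lia. Qed.
Lemma rec4 n : (Vn 4 n.+4 5 + 5 * Vn 4 n 5 = 5 * Vn 4 n.+2 5)%N.
Proof. rewrite /= ?(VsymE 4 n 7 1 erefl) ?(VsymE 4 n 5 3 erefl); lia. Qed.
Lemma rec5 n : (Vn 5 n.+2.+4 6 + 9 * Vn 5 n.+2 6 = 6 * Vn 5 n.+4 6 + 2 * Vn 5 n 6)%N.
Proof. rewrite /= ?(VsymE 5 n 10 0 erefl) ?(VsymE 5 n 8 2 erefl) ?(VsymE 5 n 6 4 erefl); lia. Qed.

Lemma half_SS n : (n.+4)./2 = (n./2).+2.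
Proof. by []. Qed.

Section Sol.
Variable R : rcfType.

Lemma sol2 (f g : nat -> R) p q :
  (forall n, f n.+4 = p * f n.+2 - q * f n) ->
  (forall k, g k.+2 = p * g k.+1 - q * g k) ->
  f 0%N = g 1%N -> f 1%N = g 1%N -> f 2%N = g 2%N -> f 3%N = g 2%N ->
  forall n, f n = g (n./2).+1.
Proof.
move=> hf hg h0 h1 h2 h3; elim/ltn_ind => n IH.
case: n IH => [|[|[|[|n]]]] IH //.
rewrite hf !IH; try lia.
by rewrite (_ : n.+4./2 = (n./2).+2) // (_ : n.+2./2 = (n./2).+1) // hg.
Qed.

Lemma sol3 (f g : nat -> R) p q r :
  (forall n, f n.+2.+4 = p * f n.+4 - q * f n.+2 + r * f n) ->
  (forall k, g k.+3 = p * g k.+2 - q * g k.+1 + r * g k) ->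
  f 0%N = g 1%N -> f 1%N = g 1%N -> f 2%N = g 2%N -> f 3%N = g 2%N -> f 4%N = g 3%N -> f 5%N = g 3%N ->
  forall n, f n = g (n./2).+1.
Proof.
move=> hf hg h0 h1 h2 h3 h4 h5; elim/ltn_ind => n IH.
case: n IH => [|[|[|[|[|[|n]]]]]] IH //.
rewrite hf !IH; try lia.
by rewrite (_ : n.+2.+4./2 = (n./2).+3) // (_ : n.+4./2 = (n./2).+2) // (_ : n.+2./2 = (n./2).+1) // hg.
Qed.

Lemma geo_rec (u p q : R) : u * u = p * u - q ->
  forall k, u ^+ k.+2 = p * u ^+ k.+1 - q * u ^+ k.
Proof. by move=> hu k; rewrite !exprS mulrA hu; ring. Qed.

Lemma geo_rec3 (u p q r : R) : u * u * u = p * (u * u) - q * u + r ->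
  forall k, u ^+ k.+3 = p * u ^+ k.+2 - q * u ^+ k.+1 + r * u ^+ k.
Proof. by move=> hu k; rewrite !exprS !mulrA hu; ring. Qed.

Lemma sq (x : R) : 0 <= x -> Num.sqrt x * Num.sqrt x = x.
Proof. by move=> hx; rewrite -expr2 sqr_sqrtr. Qed.
End Sol.

Lemma nat12 d n (c : nat) : (forall n, Vn d n.+2 d.+1 = c * Vn d n d.+1)%N ->
  Vn d 0 d.+1 = 1%N -> Vn d 1 d.+1 = 1%N -> (Vn d n d.+1 = c ^ (n./2))%N.
Proof.
move=> hr h0 h1; elim/ltn_ind: n => n IH.
case: n IH => [|[|n]] IH //.
rewrite hr IH; last lia.
by rewrite (_ : n.+2./2 = (n./2).+1) // expnS.
Qed.

Theorem lemma2 (R : rcfType) (m : nat) (hm : (0 < m)%N) :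
  [/\ (zeta m 1 = 2 ^ ((m - 1) %/ 2))%N,
      (zeta m 2 = 3 ^ ((m - 1) %/ 2))%N,
      ((zeta m 3)%:R : R) =
        ((2 + Num.sqrt 2) ^+ ((m + 1) %/ 2)%N + (2 - Num.sqrt 2) ^+ ((m + 1) %/ 2)%N) / 4,
      ((zeta m 4)%:R : R) =
        (((5 + Num.sqrt 5) / 2) ^+ ((m + 1) %/ 2)%N
         + ((5 - Num.sqrt 5) / 2) ^+ ((m + 1) %/ 2)%N) / 5
    & ((zeta m 5)%:R : R) =
        ((2 + Num.sqrt 3) ^+ ((m + 1) %/ 2)%N + (2 - Num.sqrt 3) ^+ ((m + 1) %/ 2)%N
         + 2 ^+ ((m + 1) %/ 2)%N) / 6].
Proof.
case: m hm => // n _.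
rewrite !zeta_Vn // subn1 /= divn2 addn1 divn2 (_ : n.+2./2 = (n./2).+1) //.
have s2 := @sq R 2 (ler0n R 2); have s3 := @sq R 3 (ler0n R 3); have s5 := @sq R 5 (ler0n R 5).
split.
- by apply: nat12 => // k; exact: rec1.
- by apply: nat12 => // k; exact: rec2.
- apply: (@sol2 R (fun n => (Vn 3 n 4)%:R) (fun k => ((2 + Num.sqrt 2) ^+ k + (2 - Num.sqrt 2) ^+ k) / 4) 4 2) => [k|k||||].
  + have := congr1 (GRing.natmul (1:R)) (rec3 k); rewrite natrD !natrM => h; lra.
  + rewrite (@geo_rec _ (2 + Num.sqrt 2) 4 2) ?(@geo_rec _ (2 - Num.sqrt 2) 4 2); try nra.
  all: rewrite ?expr1 ?expr2; simpl Vn. all: try nra.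
- apply: (@sol2 R (fun n => (Vn 4 n 5)%:R) (fun k => (((5 + Num.sqrt 5) / 2) ^+ k + ((5 - Num.sqrt 5) / 2) ^+ k) / 5) 5 5) => [k|k||||].
  + have := congr1 (GRing.natmul (1:R)) (rec4 k); rewrite natrD !natrM => h; lra.
  + rewrite (@geo_rec _ ((5 + Num.sqrt 5) / 2) 5 5) ?(@geo_rec _ ((5 - Num.sqrt 5) / 2) 5 5); try nra.
  all: rewrite ?expr1 ?expr2; simpl Vn. all: try nra.
- apply: (@sol3 R (fun n => (Vn 5 n 6)%:R) (fun k => ((2 + Num.sqrt 3) ^+ k + (2 - Num.sqrt 3) ^+ k + 2 ^+ k) / 6) 6 9 2) => [k|k||||||].
  + have h : (Vn 5 k.+2.+4 6)%:R + 9 * (Vn 5 k.+2 6)%:R = 6 * (Vn 5 k.+4 6)%:R + 2 * (Vn 5 k 6)%:R :> R.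
      by rewrite -!natrM -!natrD rec5.
    lra.
  + rewrite (@geo_rec3 _ (2 + Num.sqrt 3) 6 9 2) ?(@geo_rec3 _ (2 - Num.sqrt 3) 6 9 2)
      ?(@geo_rec3 _ 2 6 9 2); try nra.
    all: try (match goal with |- ?t * ?t * ?t = _ => have q : t * t = 4 * t - 1 by nra end;
      by rewrite q mulrBl -mulrA q; lra).
  all: rewrite ?expr1 ?expr2 ?exprS ?expr0 ?mulr1; simpl Vn. all: try nra.
Qed.
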